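(* Let $y_0\in Y$. If $V_{per}(y_0)=\liminf_{T\to\infty}V_T(y_0)$, then $\liminf_{T\to\infty}V_T(y_0)\ge k^*(y_0)$.
   Context: Let $Y\subset\mathbb{R}^m$ be nonempty compact, $U_0$ a compact metric space, $U(\cdot):Y\rightsquigarrow U_0$ upper semicontinuous and compact-valued, and $f:\mathbb{R}^m\times U_0\to\mathbb{R}^m$, $k:\mathbb{R}^m\times U_0\to\mathbb{R}$ continuous. Put $A(y):=\{u\in U(y): f(y,u)\in Y\}$ and $G:=\{(y,u):y\in Y,\ u\in A(y)\}$. Standing assumption: $A(y)\ne\emptyset$ for all $y$. An admissible process from $z\in Y$ is a pair $(y(t),u(t))$ with $y(0)=z$, $u(t)\in A(y(t))$ and $y(t+1)=f(y(t),u(t))$. Let $\mathcal U_T(y_0)$ denote the admissible controls from $y_0$ on $\{0,\dots,T-1\}$, and set $V_T(y_0):=\frac1T\min_{u\in\mathcal U_T(y_0)}\sum_{t=0}^{T-1}k(y(t),u(t))$. Periodic value: - A $\mathcal T$-periodic admissible process ($\mathcal T$ a positive integer) is an admissible process $(y_{\mathcal T},u_{\mathcal T})$ on $\{0,1,\dots\}$ with $(y_{\mathcal T}(t+\mathcal T),u_{\mathcal T}(t+\mathcal T))=(y_{\mathcal T}(t),u_{\mathcal T}(t))$ for all $t$. - It is finite-time reachable from $y_0$ if for some integer $\bar t\ge0$ some $u\in\mathcal U_{\bar t}(y_0)$ has trajectory with $y(\bar t)=y_{\mathcal T}(0)$. - $V_{per}(y_0):=\inf\frac1{\mathcal T}\sum_{t=0}^{\mathcal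 T-1}k(y_{\mathcal T}(t),u_{\mathcal T}(t))$, where the infimum is over all $\mathcal T$ and all such finite-time-reachable $\mathcal T$-periodic processes. LP value: - $\mathcal P(G)$ denotes the Borel probability measures on $G$ and $\mathcal M_+(G)$ the finite nonnegative Borel measures on $G$. - $W:=\{\gamma\in\mathcal P(G):\int_G(\varphi(f(y,u))-\varphi(y))\,d\gamma=0\ \forall\varphi\in C(Y)\}$. - $k^*(y_0)$ is the infimum of $\int_Gk\,d\gamma$ over pairs $(\gamma,\xi)\in\mathcal P(G)\times\mathcal M_+(G)$ with $\gamma\in W$ and $\int_G(\varphi(y_0)-\varphi(y))\,d\gamma+\int_G(\varphi(f(y,u))-\varphi(y))\,d\xi=0$ for all $\varphi\in C(Y)$. *)

(* Defs.v *)
From HB Require Import structures.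
From mathcomp Require Import all_boot all_order all_algebra.
From mathcomp Require Import all_classical all_reals all_analysis.
Set Implicit Arguments. Unset Strict Implicit. Unset Printing Implicit Defensive.
Import Order.TTheory GRing.Theory Num.Theory.
Import numFieldNormedType.Exports.
Local Open Scope classical_set_scope.
Local Open Scope ring_scope.

Section Defs.
Context {R : realType} {m : nat} {U0 : pseudoPMetricType R}.
Local Notation S := 'rV[R]_m.

Local Notation Borel_SU := (g_sigma_algebraType (@open (S * U0)%type)).

Variables (Y : set S) (U : S -> set U0) (f : S * U0 -> S) (k : S * U0 -> R).

Definition usc_on : Prop :=
  forall y, Y y -> forall O : set U0, open O -> U y `<=` O ->
    \forall y' \near y, Y y' -> U y' `<=` O.

Definition Aset (y : S) : set U0 := [set u | U y u /\ Y (f (y, u))].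
Definition Gset : set (S * U0) := [set p | Y p.1 /\ Aset p.1 p.2].

Fixpoint traj (z : S) (u : nat -> U0) (t : nat) : S :=
  match t with
  | 0 => z
  | t'.+1 => f (traj z u t', u t')
  end.

Definition admissible_ctrl (T : nat) (z : S) (u : nat -> U0) : Prop :=
  forall t, (t < T)%N -> Aset (traj z u t) (u t).

Definition V (T : nat) (z : S) : \bar R :=
  ereal_inf [set ((T%:R)^-1 * \sum_(t < T) k (traj z u t, u t))%:E
            | u in admissible_ctrl T z].

Definition periodic_process (P : nat) (yp : nat -> S) (up : nat -> U0) : Prop :=
  [/\ (0 < P)%N, Y (yp 0%N),
      (forall t, Aset (yp t) (up t) /\ yp t.+1 = f (yp t, up t)) &
      (forall t, yp (t + P)%N = yp t /\ up (t + P)%N = up t)].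

Definition finite_time_reachable (z : S) (yp : nat -> S) : Prop :=
  exists (tb : nat) (u : nat -> U0), admissible_ctrl tb z u /\ traj z u tb = yp 0%N.

Definition Vper (z : S) : \bar R :=
  ereal_inf [set x | exists (P : nat) (yp : nat -> S) (up : nat -> U0),
     [/\ periodic_process P yp up, finite_time_reachable z yp &
         x = ((P%:R)^-1 * \sum_(t < P) k (yp t, up t))%:E]].

Definition CY (phi : S -> R) : Prop := {within Y, continuous phi}.

(* Borel probability measures on G, seen as Borel measures on R^m x U0
   concentrated on G *)
Definition prob_on_G (mu : {measure set Borel_SU -> \bar R}) : Prop :=
  mu [set: Borel_SU] = 1%E /\ mu (~` (Gset : set Borel_SU)) = 0%E.

Definition finmeas_on_G (mu : {measure set Borel_SU -> \bar R}) : Prop :=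
  (mu [set: Borel_SU] < +oo)%E /\ mu (~` (Gset : set Borel_SU)) = 0%E.

Definition Wset (gamma : {measure set Borel_SU -> \bar R}) : Prop :=
  prob_on_G gamma /\
  forall phi, CY phi ->
    (\int[gamma]_(p in (Gset : set Borel_SU)) (phi (f p) - phi p.1)%:E = 0)%E.

Definition LP_feasible (z : S) (gamma xi : {measure set Borel_SU -> \bar R}) : Prop :=
  [/\ Wset gamma, finmeas_on_G xi &
      forall phi, CY phi ->
        (\int[gamma]_(p in (Gset : set Borel_SU)) (phi z - phi p.1)%:E
         + \int[xi]_(p in (Gset : set Borel_SU)) (phi (f p) - phi p.1)%:E = 0)%E].

Definition kstar (z : S) : \bar R :=
  ereal_inf [set (\int[gamma]_(p in (Gset : set Borel_SU)) (k p)%:E)%E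
            | gamma in [set g | exists xi, LP_feasible z g xi]].

End Defs.

(* Main.v *)
Require Import Defs.
From HB Require Import structures.
From mathcomp Require Import all_boot all_order all_algebra.
From mathcomp Require Import all_classical all_reals all_analysis.
From mathcomp Require Import measurable_realfun.
From mathcomp Require Import lra.
Import Order.TTheory GRing.Theory Num.Theory.
Import numFieldNormedType.Exports.
Local Open Scope classical_set_scope.
Local Open Scope ring_scope.

Section Aux.
Context {R : realType} {m : nat} {U0 : pseudoPMetricType R}.
Hypothesis hU0 : hausdorff_space U0.
Local Notation S := 'rV[R]_m.
Local Notation T := (g_sigma_algebraType (@open (S * U0)%type)).

Lemma closed_meas (A : set T) : closed (A : set (S * U0)) -> measurable A.
Proof.
move=> cA. rewrite -[A]setCK. apply: measurableC.
apply: sub_gen_smallest. exact: closed_openC.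
Qed.

Lemma set1_meas (p : T) : measurable [set p].
Proof.
have -> : [set p] = (fst @^-1` [set p.1]) `&` (snd @^-1` [set p.2]) :> set T.
  apply/seteqP; split; first by move=> x /= ->.
  by case: p => a b; case=> c d /= [/= -> ->].
apply: closed_meas; apply: closedI.
- apply: (proj1 (continuous_closedP (@fst S U0))).
    by move=> x; exact: cvg_fst.
  apply: accessible_closed_set1; apply: hausdorff_accessible; exact: norm_hausdorff.
- apply: (proj1 (continuous_closedP (@snd S U0))).
    by move=> x; exact: cvg_snd.
  apply: accessible_closed_set1; apply: hausdorff_accessible; exact: hU0.
Qed.

Definition FS (q : nat -> T) (M : nat) : set T :=
  [set x | exists2 j, (j < M)%N & x = q j].

Lemma FS_measI q M (X : set T) : measurable (FS q M `&` X).
Proof.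
elim: M => [|M IH].
  rewrite (_ : _ `&` _ = set0) //; apply/seteqP; split => // x [[j]] //.
have -> : FS q M.+1 `&` X = (FS q M `&` X) `|` ([set q M] `&` X).
  apply/seteqP; split.
    move=> x [[j]]; rewrite ltnS leq_eqVlt => /orP[/eqP -> -> Xx|jM -> Xx].
      by right.
    by left; split => //; exists j.
  move=> x [[[j jM ->] Xx]|[-> Xx]]; split => //.
    by exists j => //; rewrite ltnS ltnW.
  by exists M.
apply: measurableU => //.
have [Xq|Xq] := pselect (X (q M)).
  rewrite (_ : _ `&` _ = [set q M]); first exact: set1_meas.
  by apply/seteqP; split => [x [->]|x ->].
by rewrite (_ : _ `&` _ = set0) //; apply/seteqP; split => // x [->].
Qed.

Lemma FS_mfun q M (D : set T) (F : T -> \bar R) :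
  measurable_fun (D `&` FS q M) (F : T -> \bar R).
Proof.
move=> _ B mB; rewrite (setIC D) -setIA; exact: FS_measI.
Qed.


Import HBNNSimple.
Local Open Scope ereal_scope.

Lemma int_restrict (mu : {measure set T -> \bar R}) (A : set T)
  (mA : measurable A) (muA : mu (~` A) = 0) (G : T -> \bar R)
  (G0 : forall x, 0 <= G x) :
  \int[mu]_x G x = \int[mu]_x (G \_ A) x.
Proof.
have GA0 : forall x, 0 <= (G \_ A) x.
  by move=> x; rewrite /patch; case: ifP.
rewrite !ge0_integralTE //.
apply/eqP; rewrite eq_le; apply/andP; split.
- apply: ge_ereal_sup => ? [h /= hG <-].
  have -> : sintegral mu h = sintegral mu (proj_nnsfun h mA).
    rewrite -integralT_nnsfun (ge0_negligible_integral (N := ~` A)) //.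
    + by rewrite setTD setCK integral_nnsfun // mrestrict.
    all: try exact: measurableC.
    all: try (by move=> *; rewrite lee_fin).
    all: try (apply/measurable_EFinP; exact: measurable_funP).
  apply: ereal_sup_ubound; exists (proj_nnsfun h mA) => // x.
  rewrite -mrestrict /patch; case: ifP => // _; exact: hG.
- apply: ge_ereal_sup => ? [h /= hG <-]; apply: ereal_sup_ubound.
  exists h => //= x; apply: le_trans (hG x) _; rewrite /patch; case: ifP => // _.
Qed.

Lemma int_restrictD (mu : {measure set T -> \bar R}) (A : set T)
  (mA : measurable A) (muA : mu (~` A) = 0) (D : set T) (F : T -> \bar R) :
  \int[mu]_(x in D) F x = \int[mu]_(x in D `&` A) F x.
Proof.
have H : forall G : T -> \bar R, (forall x, 0 <= G x) ->
    \int[mu]_(x in D) G x = \int[mu]_(x in D `&` A) G x.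
  move=> G G0.
  rewrite [LHS]integral_mkcond [RHS]integral_mkcondr [RHS]integral_mkcond.
  rewrite [LHS](int_restrict _ _ mA muA); last first.
    by move=> x; rewrite patchE; case: ifP => // _; exact: G0.
  congr integral; apply/funext => x; rewrite !patchE.
  by case: ifP; case: ifP.
rewrite integralE [RHS]integralE !H //.
Qed.


Lemma int_dbl (c : {nonneg R}) (n : nat) (s : nat -> nat) (r : nat -> nat -> T)
  (E : set T) (mE : measurable E)
  (hr : forall t j, (t < n)%N -> (j < s t)%N -> E (r t j))
  (F : T -> \bar R) (mF : measurable_fun E F) (F0 : forall x, 0 <= F x) :
  \int[mscale c (msum (fun t => msum (fun j => \d_(r t j)) (s t)) n)]_(x in E) F x
  = c%:num%:E * \sum_(t < n) \sum_(j < s t) F (r t j).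
Proof.
rewrite ge0_integral_mscale //; congr (_ * _).
rewrite ge0_integral_measure_sum //; apply: eq_bigr => -[t ht] _.
rewrite ge0_integral_measure_sum //; apply: eq_bigr => -[j hj] _.
by rewrite integral_dirac // diracE mem_set ?mul1e //; exact: hr.
Qed.

Lemma maxr_posneg (a : R) : (Num.max a 0 - Num.max (- a) 0)%R = a.
Proof.
rewrite /Num.Def.maxr; case: ifPn => h1; case: ifPn => h2; lra.
Qed.

Lemma dsumEFin n (s : nat -> nat) (h : nat -> nat -> R) :
  \sum_(t < n) \sum_(j < s t) (h t j)%:E = (\sum_(t < n) \sum_(j < s t) h t j)%:E.
Proof. by rewrite -sumEFin; apply: eq_bigr => t _; rewrite sumEFin. Qed.

Lemma int_dbl_real (c : {nonneg R}) (n : nat) (s : nat -> nat) (r : nat -> nat -> T)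
  (E : set T) (mE : measurable E)
  (hr : forall t j, (t < n)%N -> (j < s t)%N -> E (r t j))
  (g : T -> R) (mg : measurable_fun E (fun x => (g x)%:E)) :
  \int[mscale c (msum (fun t => msum (fun j => \d_(r t j)) (s t)) n)]_(x in E) (g x)%:E
  = (c%:num * \sum_(t < n) \sum_(j < s t) g (r t j))%:E.
Proof.
rewrite integralE !int_dbl //; last first.
  exact: measurable_funepos.
  exact: measurable_funeneg.
have -> : (fun x => (g x)%:E)^\+ = (fun x => (Num.max (g x) 0)%:E).
  by apply/funext => x; rewrite funeposE EFin_max.
have -> : (fun x => (g x)%:E)^\- = (fun x => (Num.max (- g x) 0)%:E).
  by apply/funext => x; rewrite funenegE EFin_max.
rewrite (dsumEFin n s (fun t j => Num.max (g (r t j)) 0%R)).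
rewrite (dsumEFin n s (fun t j => Num.max (- g (r t j))%R 0%R)).
rewrite -!EFinM -EFinB; congr EFin; rewrite -mulrBr -sumrB; congr (_ * _)%R.
apply: eq_bigr => t _; rewrite -sumrB; apply: eq_bigr => j _.
exact: maxr_posneg.
Qed.

Lemma dbl_val (c : {nonneg R}) (n : nat) (s : nat -> nat) (r : nat -> nat -> T)
  (X : set T) :
  mscale c (msum (fun t => msum (fun j => \d_(r t j)) (s t)) n) X
  = (c%:num * \sum_(t < n) \sum_(j < s t) (r t j \in X)%:R)%:E.
Proof.
rewrite /mscale /msum /= EFinM; congr (_ * _).
rewrite -sumEFin; apply: eq_bigr => t _.
rewrite -sumEFin; apply: eq_bigr => j _.
exact: diracE.
Qed.


Lemma dbl_val0 (c : {nonneg R}) (n : nat) (s : nat -> nat) (r : nat -> nat -> T)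
  (X : set T) : (forall t j, (t < n)%N -> (j < s t)%N -> ~ X (r t j)) ->
  mscale c (msum (fun t => msum (fun j => \d_(r t j)) (s t)) n) X = 0.
Proof.
move=> hX; rewrite dbl_val big1 ?mulr0 // => -[t ht] _.
apply: big1 => -[j hj] _.
by rewrite memNset //; exact: hX.
Qed.

Lemma dbl_val1 (c : {nonneg R}) (n : nat) (s : nat -> nat) (r : nat -> nat -> T)
  (X : set T) : (forall t j, (t < n)%N -> (j < s t)%N -> X (r t j)) ->
  mscale c (msum (fun t => msum (fun j => \d_(r t j)) (s t)) n) X
  = (c%:num * \sum_(t < n) (s t)%:R)%:E.
Proof.
move=> hX; rewrite dbl_val; congr (EFin (_ * _))%R; apply: eq_bigr => -[t ht] _.
rewrite (eq_bigr (fun _ => 1%R)); first by rewrite sumr_const card_ord.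
by move=> -[j hj] _; rewrite mem_set //; exact: hX.
Qed.


Lemma dbl_fin (c : {nonneg R}) (n : nat) (s : nat -> nat) (r : nat -> nat -> T)
  (X : set T) :
  mscale c (msum (fun t => msum (fun j => \d_(r t j)) (s t)) n) X < +oo.
Proof. by rewrite dbl_val; exact: ltry. Qed.

End Aux.

Local Notation BT R m U0 := (g_sigma_algebraType (@open ('rV[R]_m * U0)%type)).

Theorem corollary2p5 (R : realType) (m : nat) (U0 : pseudoPMetricType R)
  (Y : set 'rV[R]_m) (U : 'rV[R]_m -> set U0)
  (f : 'rV[R]_m * U0 -> 'rV[R]_m) (k : 'rV[R]_m * U0 -> R)
  (hY0 : Y !=set0) (hYc : compact Y)
  (hU0sep : hausdorff_space U0) (hU0c : compact [set: U0])
  (hUusc : usc_on Y U) (hUcpt : forall y, Y y -> compact (U y))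
  (hf : continuous f) (hk : continuous k)
  (hA : forall y, Y y -> Aset Y U f y !=set0)
  (y0 : 'rV[R]_m) (hy0 : Y y0) :
  Vper Y U f k y0 = limn_einf (fun T => V Y U f k T y0) ->
  (limn_einf (fun T => V Y U f k T y0) >= kstar Y U f k y0)%E.
Proof.
move=> HV; rewrite -HV.
apply: le_ereal_inf_tmp => _ [P [yp [up [hper [tb [u [hadm htraj]]] ->]]]].
case: hper => P0 Y0 hstep hperd.
pose w := fun j => if (j < tb)%N then u j else up (j - tb)%N.
pose xs := traj f y0 w.
pose pt := fun j => ((xs j, w j) : g_sigma_algebraType (@open ('rV[R]_m * U0)%type)).
have F1 : forall j, (j <= tb)%N -> xs j = traj f y0 u j.
  elim => [|j IH] hj.
    reflexivity.
  have E1 : xs j.+1 = f (xs j, w j) by reflexivity.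
  rewrite E1 IH; last exact: ltnW.
  have E2 : w j = u j by rewrite /w hj.
  rewrite E2; reflexivity.
have Fw : forall t, w (tb + t)%N = up t.
  move=> t; rewrite /w.
  have -> : (tb + t < tb)%N = false by apply/negbTE; rewrite -leqNgt leq_addr.
  by rewrite addKn.
have F2 : forall t, xs (tb + t)%N = yp t.
  elim => [|t IH].
    by rewrite addn0 F1 // htraj.
  rewrite addnS.
  have E1 : xs (tb + t).+1 = f (xs (tb + t)%N, w (tb + t)%N) by reflexivity.
  by rewrite E1 IH Fw (proj2 (hstep t)).
have F3a : forall j, Aset Y U f (xs j) (w j).
  move=> j; have [jtb|jtb] := ltnP j tb.
    rewrite F1; last exact: ltnW.
    have -> : w j = u j by rewrite /w jtb.
    exact: (hadm j jtb).
  have -> : j = (tb + (j - tb))%N by rewrite subnKC.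
  rewrite F2 Fw; exact: (proj1 (hstep _)).
have F3b : forall j, Y (xs j).
  case => [|j]; first exact: hy0.
  have := F3a j; case => _ h; exact: h.
have F3 : forall j, Gset Y U f (pt j).
  by move=> j; split; [exact: F3b|exact: F3a].
have c0 : (0 <= (P%:R : R)^-1) by rewrite invr_ge0 ler0n.
pose c : {nonneg R} := NngNum c0.
pose A := FS pt (tb + P)%N.
have mA : measurable A by have := FS_measI hU0sep pt (tb + P)%N setT; rewrite setIT.
pose gam := mscale c (msum (fun t => msum (fun j => \d_(pt (tb + t + j)%N)) 1) P).
pose xi := mscale c (msum (fun t => msum (fun j => \d_(pt j)) (tb + t)%N) P).
have hgA : forall t j, (t < P)%N -> (j < 1)%N -> A (pt (tb + t + j)%N).
  move=> t j tP j1; exists (tb + t + j)%N => //.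
  by rewrite ltnS leqn0 in j1; move/eqP: j1 => ->; rewrite addn0 ltn_add2l.
have hxA : forall t j, (t < P)%N -> (j < tb + t)%N -> A (pt j).
  move=> t j tP jl; exists j => //; apply: (leq_trans jl).
  by rewrite leq_add2l ltnW.
have gamA : gam (~` A) = 0%E.
  by apply: dbl_val0 => t j tP jl H; apply: H; exact: (hgA t j tP jl).
have xiA : xi (~` A) = 0%E.
  by apply: dbl_val0 => t j tP jl H; apply: H; exact: (hxA t j tP jl).
have mGA : measurable ((Gset Y U f : set (BT R m U0)) `&` A).
  by rewrite setIC; exact: (FS_measI hU0sep).
have int_gam : forall g : _ -> R,
    (\int[gam]_(p in (Gset Y U f : set (BT R m U0))) (g p)%:E)%E
    = (c%:num * \sum_(t < P) \sum_(j < 1) g (pt (tb + t + j)%N))%:E.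
  move=> g; rewrite (int_restrictD _ _ mA gamA) int_dbl_real //.
    by move=> t j tP jl; split; [exact: F3|exact: hgA].
  exact: (FS_mfun hU0sep).
have int_xi : forall g : _ -> R,
    (\int[xi]_(p in (Gset Y U f : set (BT R m U0))) (g p)%:E)%E
    = (c%:num * \sum_(t < P) \sum_(j < (tb + t)%N) g (pt j))%:E.
  move=> g; rewrite (int_restrictD _ _ mA xiA) int_dbl_real //.
    by move=> t j tP jl; split; [exact: F3|exact: (hxA t j tP jl)].
  exact: (FS_mfun hU0sep).
have P0' : (P%:R : R) != 0 by rewrite pnatr_eq0 -lt0n.
have hP : yp P = yp 0%N by have := proj1 (hperd 0%N); rewrite add0n.
have tel : forall (phi : 'rV[R]_m -> R) n,
    \sum_(j < n) (phi (f (pt j)) - phi (pt j).1) = phi (xs n) - phi y0.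
  move=> phi n; rewrite -(big_mkord xpredT (fun j => phi (f (pt j)) - phi (pt j).1)).
  by apply: (@telescope_sumr_eq _ 0%N n (fun k => phi (xs k))).
apply: ereal_inf_lbound.
exists gam; last first.
  rewrite int_gam; congr EFin; congr (_ * _)%R.
  by apply: eq_bigr => t _; rewrite big_ord1 addn0 /pt F2 Fw.
exists xi; split.
- split.
  + split.
    * etransitivity; first (apply: dbl_val1 => t j _ _; exact: I).
      have -> : (\sum_(t < P) (1%N)%:R = P%:R :> R).
        by rewrite sumr_const card_ord.
      by rewrite /= mulVf.
    * by apply: dbl_val0 => t j tP jl H; apply: H; exact: F3.
  + move=> phi _; rewrite int_gam.
    transitivity ((c%:num * 0)%R%:E); last by rewrite mulr0.
    congr EFin; congr (_ * _)%R.
    under eq_bigr => t _ do rewrite big_ord1 addn0.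
    rewrite -(big_mkord xpredT (fun t => phi (f (pt (tb+t)%N)) - phi (pt (tb+t)%N).1)).
    rewrite (@telescope_sumr_eq _ 0%N P (fun t => phi (xs (tb + t)%N))) //.
      by rewrite !F2 hP subrr.
    by move=> t _; rewrite addnS.
- split.
  + exact: dbl_fin.
  + by apply: dbl_val0 => t j tP jl H; apply: H; exact: F3.
- move=> phi _; rewrite int_gam int_xi -EFinD.
  transitivity ((0:R)%:E); last by [].
  congr EFin; rewrite -mulrDr -big_split /=.
  rewrite big1 ?mulr0 // => t _.
  rewrite big_ord1 addn0 tel.

  by rewrite addrA subrK subrr.
Qed.
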